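(* Let $\mathbf d=(d_1,\dots,d_m)\in(\mathbb Z_{\ge0})^m$ and let $z=z(\mathbf s)$ be the formal power series in $\mathbf s=(s_1,\dots,s_m)$ determined by $1-z+\sum_{i=1}^m s_iz^{d_i+1}=0$, $z(0)=1$. Define the formal power series $$F(\mathbf s)=\sum_{\mathbf k\in(\mathbb Z_{\ge0})^m}\frac{\binom{2+(\mathbf d+\mathbf 1)\cdot\mathbf k}{\mathbf k}}{(1+(\mathbf d+\mathbf 1)\cdot\mathbf k)(2+(\mathbf d+\mathbf 1)\cdot\mathbf k)}\mathbf s^{\mathbf k},$$ $$G(\mathbf s)=\sum_{\mathbf k\in(\mathbb Z_{\ge0})^m}\frac{6+\sum_{i=1}^m\frac{d_i(d_i+1)}{d_i+2}k_i}{(2+(\mathbf d+\mathbf 1)\cdot\mathbf k)(3+(\mathbf d+\mathbf 1)\cdot\mathbf k)(4+(\mathbf d+\mathbf 1)\cdot\mathbf k)}\binom{4+(\mathbf d+\mathbf 1)\cdot\mathbf k}{\mathbf k}\mathbf s^{\mathbf k}.$$ Then $G=F^2$ as formal power series; more precisely $G(\mathbf s)=F(\mathbf s)^2-\frac14z^2\big(1-z+\sum_{i=1}^ms_iz^{d_i+1}\big)^2$.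
   Context: Notation: $\mathbf 1=(1,\dots,1)$, $\mathbf a\cdot\mathbf b=\sum a_ib_i$, $\mathbf s^{\mathbf k}=\prod s_i^{k_i}$, $\mathbf k!=\prod k_i!$, and the multinomial coefficient $\binom{n}{\mathbf k}=\frac{n!}{k_1!\cdots k_m!\,(n-\mathbf k\cdot\mathbf 1)!}$. *)

(* Defs.v *)
(* Multivariate formal power series in m variables over rat
   are represented by their coefficient functions (exponent vectors 'I_m -> nat). *)
From HB Require Import structures.
From mathcomp Require Import all_boot all_order all_algebra.
Set Implicit Arguments. Unset Strict Implicit. Unset Printing Implicit Defensive.
Import Order.TTheory GRing.Theory Num.Theory.
Local Open Scope ring_scope.

Definition mps (m : nat) := ('I_m -> nat) -> rat.

Definition dotv (m : nat) (a k : 'I_m -> nat) : nat := (\sum_(i < m) a i * k i)%N.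

Definition multinom (m : nat) (n : nat) (k : 'I_m -> nat) : rat :=
  (n`!)%:R / ((\prod_(i < m) (k i)`!) * (n - \sum_(i < m) k i)`!)%N%:R.

Definition mps_mul (m : nat) (f g : mps m) : mps m := fun k =>
  \sum_(j : {ffun 'I_m -> 'I_(\max_(i < m) k i).+1} | [forall i, (j i <= k i)%N])
     f (fun i => nat_of_ord (j i)) * g (fun i => (k i - j i)%N).

Definition Nk (m : nat) (d k : 'I_m -> nat) : nat := dotv (fun i => (d i).+1) k.

Definition Fser (m : nat) (d : 'I_m -> nat) : mps m := fun k =>
  multinom (2 + Nk d k) k / ((1 + Nk d k)%:R * (2 + Nk d k)%:R).

Definition Gser (m : nat) (d : 'I_m -> nat) : mps m := fun k =>
  (6 + \sum_(i < m) ((d i * (d i).+1)%:R / (d i + 2)%:R) * (k i)%:R)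
  / ((2 + Nk d k)%:R * (3 + Nk d k)%:R * (4 + Nk d k)%:R)
  * multinom (4 + Nk d k) k.

(* Main.v *)
Require Import Defs.
From HB Require Import structures.
From mathcomp Require Import all_boot all_order all_algebra.
From mathcomp Require Import ring lra zify.
From Stdlib Require Import FunctionalExtensionality.
Set Implicit Arguments. Unset Strict Implicit. Unset Printing Implicit Defensive.
Import Order.TTheory GRing.Theory Num.Theory.
Local Open Scope ring_scope.
Section Conv.
Variable m : nat.
Implicit Types (f g : mps m) (k : 'I_m -> nat).

Definition convB B f g k := \sum_(j : {ffun 'I_m -> 'I_B.+1} | [forall i, (j i <= k i)%N])
     f (fun i => nat_of_ord (j i)) * g (fun i => (k i - j i)%N).

Lemma val_inord B x : (@inord B x : nat) = if (x < B.+1)%N then x else 0%N.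
Proof. by rewrite /inord val_insubd. Qed.

Lemma convBS B f g k : (forall i, (k i <= B)%N) -> convB B.+1 f g k = convB B f g k.
Proof.
move=> Hk; rewrite /convB.
pose h (j : {ffun 'I_m -> 'I_B.+1}) : {ffun 'I_m -> 'I_B.+2} := [ffun i => widen_ord (leqnSn _) (j i)].
pose h' (j : {ffun 'I_m -> 'I_B.+2}) : {ffun 'I_m -> 'I_B.+1} := [ffun i => inord (j i)].
rewrite (reindex_onto h h').
- apply: eq_big => j.
  + have -> : h' (h j) == j.
      by apply/eqP/ffunP => i; apply: val_inj; rewrite /h /h' !ffunE /= inordK.
    rewrite Bool.andb_true_r; apply/forallP/forallP => H i; move: (H i); by rewrite /h ffunE.
  + move=> _; congr (f _ * g _); apply: functional_extensionality => i; by rewrite /h ffunE.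
- move=> j /forallP Hj; apply/ffunP => i; apply: val_inj; rewrite /h /h' !ffunE /= inordK //.
  rewrite ltnS; exact: leq_trans (Hj i) (Hk i).
Qed.

Lemma convB_mul B f g k : (forall i, (k i <= B)%N) -> convB B f g k = mps_mul f g k.
Proof.
have HkM : forall i, (k i <= \max_(i < m) k i)%N by move=> i; exact: leq_bigmax.
elim: B => [|B IH] Hk.
  have HM : (\max_(i < m) k i = 0)%N.
    apply/eqP; rewrite -leqn0; apply/bigmax_leqP => i _; exact: Hk.
  by rewrite /mps_mul HM.
have [HM|HM] := leqP (\max_(i < m) k i) B.
  rewrite convBS; last by move=> i; exact: leq_trans (HkM i) HM.
  apply: IH => i; exact: leq_trans (HkM i) HM.
have -> : (B.+1 = \max_(i < m) k i)%N.
  apply/eqP; rewrite eqn_leq HM /=. apply/bigmax_leqP => i _; exact: Hk.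
by [].
Qed.

Definition ek (i : 'I_m) k : 'I_m -> nat := fun x => if x == i then (k x).-1 else k x.
Definition shift (i : 'I_m) f : mps m := fun k => if (0 < k i)%N then f (ek i k) else 0.

Lemma mm_ext f f' g g' k : (forall j, f j = f' j) -> (forall j, g j = g' j) ->
  mps_mul f g k = mps_mul f' g' k.
Proof. by move=> Hf Hg; apply: eq_bigr => j _; rewrite Hf Hg. Qed.

Lemma mm_sub f f' g k : mps_mul (fun j => f j - f' j) g k = mps_mul f g k - mps_mul f' g k.
Proof. rewrite /mps_mul -sumrB; apply: eq_bigr => j _; by rewrite mulrBl. Qed.

Lemma mm_scale c f g k : mps_mul (fun j => c * f j) g k = c * mps_mul f g k.
Proof. rewrite /mps_mul mulr_sumr; apply: eq_bigr => j _; by rewrite mulrA. Qed.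

Lemma mm_sum (F : 'I_m -> mps m) g k :
  mps_mul (fun j => \sum_(i < m) F i j) g k = \sum_(i < m) mps_mul (F i) g k.
Proof. rewrite /mps_mul exchange_big /=; apply: eq_bigr => j _; by rewrite mulr_suml. Qed.

Lemma mm_shift i f g k : mps_mul (shift i f) g k = shift i (mps_mul f g) k.
Proof.
rewrite {2}/shift; have [Hki|Hki] := posnP (k i).
  rewrite /mps_mul big1 // => j /forallP Hj.
  have : (j i <= k i)%N := Hj i. rewrite Hki leqn0 => /eqP Hji.
  by rewrite /shift /= Hji ltnn mul0r.
set B := (\max_(x < m) k x).
have HkB : forall x, (k x <= B)%N by move=> x; exact: leq_bigmax.
have Hb : forall x, (ek i k x <= B)%N.
  move=> x; rewrite /ek; case: (x == i) => //; exact: leq_trans (leq_pred _) (HkB x).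
rewrite -(@convB_mul B f g (ek i k) Hb).
change (convB B (shift i f) g k = convB B f g (ek i k)).
rewrite /convB (bigID (fun j : {ffun 'I_m -> 'I_B.+1} => (0 < j i)%N)) /=.
rewrite [X in _ + X]big1 ?addr0; last first.
  move=> j /andP[_]; rewrite -leqNgt leqn0 /shift /= => /eqP ->; by rewrite ltnn mul0r.
pose h (j : {ffun 'I_m -> 'I_B.+1}) : {ffun 'I_m -> 'I_B.+1} :=
  [ffun x => inord (j x + (x == i))].
pose h' (j : {ffun 'I_m -> 'I_B.+1}) : {ffun 'I_m -> 'I_B.+1} :=
  [ffun x => inord (j x - (x == i))].
have hv : forall (j : {ffun 'I_m -> 'I_B.+1}), (forall x, j x <= ek i k x)%N ->
    forall x, (h j x : nat) = (j x + (x == i))%N.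
  move=> j Hj x; rewrite /h ffunE inordK // ltnS; move: (Hj x) (HkB x); rewrite /ek.
  case: eqP => [->|_] /=; lia.
rewrite (reindex_onto h h').
- rewrite [LHS](eq_bigl (fun j : {ffun 'I_m -> 'I_B.+1} => [forall x, j x <= ek i k x]%N)).
  + apply: eq_bigr => j.
    move=> /forallP Hj; have Hv := hv j Hj.
    rewrite /shift /= Hv eqxx addn1 /=.
    congr (f _ * g _); apply: functional_extensionality => x; rewrite /ek Hv.
      - case: eqP => [->|_] /=; lia.
      - move: (Hj x); rewrite /ek; case: eqP => [->|_] /=; lia.
  + move=> j; apply/idP/idP.
    * move=> /andP[/andP[/forallP H1 H2] _]; apply/forallP => x.
      move: H2; rewrite /h ffunE val_inord; case: ifP => C // _.
      move: (H1 x); rewrite /h ffunE val_inord /ek.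
      case: (eqVneq x i) => [->|Hx].
        rewrite eqxx in C; rewrite C; lia.
      by rewrite /= addn0 ltn_ord.
    * move=> /forallP Hj.
      have Hv := hv j Hj.
      apply/andP; split; first (apply/andP; split).
      - apply/forallP => x; rewrite Hv; move: (Hj x); rewrite /ek.
        case: eqP => [->|_] /=; lia.
      - by rewrite Hv eqxx addn1.
      - apply/eqP/ffunP => x; apply: val_inj; rewrite /h' ffunE /= Hv addnK inordK //.
- move=> j /andP[/forallP Hj Hji]; apply/ffunP => x; apply: val_inj.
  have Hjx : (j x < B.+1)%N by [].
  rewrite /h /h' !ffunE /=.
  have e1 : (@inord B (j x - (x == i)) : nat) = (j x - (x == i))%N.
    by rewrite inordK //; move: (ltn_ord (j x)); case: eqP => _ /=; lia.
  rewrite e1 inordK; move: (ltn_ord (j x)) Hji; case: eqP => [->|_] /=; lia.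
Qed.

Lemma mm_comm f g k : mps_mul f g k = mps_mul g f k.
Proof.
rewrite /mps_mul.
set B := \max_(x < m) k x.
have HkB : forall x, (k x <= B)%N by move=> x; exact: leq_bigmax.
pose h (j : {ffun 'I_m -> 'I_B.+1}) : {ffun 'I_m -> 'I_B.+1} := [ffun x => inord (k x - j x)].
have hv : forall (j : {ffun 'I_m -> 'I_B.+1}) x, (h j x : nat) = (k x - j x)%N.
  move=> j x; rewrite /h ffunE inordK // ltnS; exact: leq_trans (leq_subr _ _) (HkB x).
have hh : forall j : {ffun 'I_m -> 'I_B.+1}, [forall x, j x <= k x]%N -> h (h j) = j.
  move=> j /forallP Hj; apply/ffunP => x; apply: val_inj; rewrite /= !hv.
  exact: subKn (Hj x).
rewrite (reindex_onto h h) //.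
rewrite [LHS](eq_bigl (fun j : {ffun 'I_m -> 'I_B.+1} => [forall x, j x <= k x]%N)).
  apply: eq_bigr => j /forallP Hj; rewrite mulrC.
  congr (g _ * f _); apply: functional_extensionality => x; rewrite hv //.
  exact: subKn (Hj x).
move=> j; apply/idP/idP.
  move=> /andP[_ /eqP E]; apply/forallP => x; rewrite -E hv; exact: leq_subr.
move=> Hj; rewrite hh // eqxx andbT; apply/forallP => x; rewrite hv; exact: leq_subr.
Qed.

Variable d : 'I_m -> nat.
Definition kf k : nat := \prod_(i < m) (k i)`!.
Definition Mm k : nat := dotv d k.

Lemma NE k : Nk d k = (\sum_i k i + Mm k)%N.
Proof. rewrite /Nk /Mm /dotv -big_split; apply: eq_bigr => i _; by rewrite mulSn. Qed.

Lemma dot_ek (a : 'I_m -> nat) k i : (0 < k i)%N -> (dotv a (ek i k) + a i = dotv a k)%N.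
Proof.
move=> Hk; rewrite /dotv (bigD1 i) //= [in RHS](bigD1 i) //= /ek eqxx.
rewrite (eq_bigr (fun x => a x * k x)%N); last by move=> x /negbTE ->.
have E : (a i * (k i).-1 + a i = a i * k i)%N by rewrite -{2}(prednK Hk) mulnS addnC.
lia.
Qed.

Lemma Nk_ek k i : (0 < k i)%N -> (Nk d (ek i k) + (d i).+1 = Nk d k)%N.
Proof. exact: dot_ek. Qed.
Lemma Mm_ek k i : (0 < k i)%N -> (Mm (ek i k) + d i = Mm k)%N.
Proof. exact: dot_ek. Qed.
Lemma kf_ek k i : (0 < k i)%N -> kf k = (k i * kf (ek i k))%N.
Proof.
move=> Hk; rewrite /kf (bigD1 i) //= [in RHS](bigD1 i) //= /ek eqxx.
rewrite [in RHS](eq_bigr (fun x => (k x)`!)); last by move=> x /negbTE ->.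
by rewrite -{1}(prednK Hk) factS prednK // mulnA.
Qed.

Lemma kf_gt0 k : (0 < kf k)%N.
Proof. by apply: prodn_gt0 => i; exact: fact_gt0. Qed.

Lemma Mm_split k (j : 'I_m -> nat) : (forall x, j x <= k x)%N ->
  Mm k = (Mm j + Mm (fun x => k x - j x))%N.
Proof.
move=> H; rewrite /Mm /dotv -big_split; apply: eq_bigr => x _ /=.
by rewrite -mulnDr subnKC.
Qed.

Lemma Nk0 k : Nk d k = 0%N -> forall i, k i = 0%N.
Proof.
move=> /eqP; rewrite /Nk /dotv sum_nat_eq0 => /forallP H i.
by move: (H i); rewrite muln_eq0 /= => /eqP.
Qed.

Lemma fact_neq0 n : (n`!)%:R != 0 :> rat.
Proof. by rewrite pnatr_eq0 -lt0n fact_gt0. Qed.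
Lemma kf_neq0 k : (kf k)%:R != 0 :> rat.
Proof. by rewrite pnatr_eq0 -lt0n kf_gt0. Qed.

Lemma posD_neq0 (a b : rat) : 0 < a -> 0 <= b -> a + b != 0.
Proof. move=> ha hb; apply/eqP => H; lra. Qed.

Lemma posD_neq0' (a b : rat) : 0 <= a -> 0 < b -> a + b != 0.
Proof. move=> ha hb; apply/eqP => H; lra. Qed.

Ltac side := repeat (apply/andP; split);
  try (exact: fact_neq0); try (exact: kf_neq0);
  try (by rewrite pnatr_eq0);
  try (apply: posD_neq0; [lra | exact: ler0n]);
  try (apply: posD_neq0'; [exact: ler0n | lra]).

Definition R b k : rat := (b + Nk d k)`!%:R / ((kf k)%:R * (b + Mm k)`!%:R).

Lemma R_term b k i : (0 < k i)%N -> R (b + (d i).+1) (ek i k) =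
  (k i)%:R * (b + Nk d k)`!%:R / ((kf k)%:R * (b + Mm k).+1`!%:R).
Proof.
move=> Hk; rewrite /R.
have e1 : (b + (d i).+1 + Nk d (ek i k) = b + Nk d k)%N by have := Nk_ek Hk; lia.
have e2 : (b + (d i).+1 + Mm (ek i k) = (b + Mm k).+1)%N by have := Mm_ek Hk; lia.
rewrite e1 e2 (kf_ek Hk) natrM.
have H1 : (k i)%:R != 0 :> rat by rewrite pnatr_eq0 -lt0n.
have := kf_neq0 (ek i k); have := fact_neq0 (b + Mm k).+1.
move=> *; field; apply/and3P; split => //.
Qed.

Lemma R_diff b k : R b.+1 k - R b k = \sum_(i < m) shift i (R (b + (d i).+1)) k.
Proof.
rewrite (eq_bigr (fun i => (k i)%:R * ((b + Nk d k)`!%:R / ((kf k)%:R * (b + Mm k).+1`!%:R)))); last first.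
  move=> i _; rewrite /shift; have [Hk|Hk] := posnP (k i); first by rewrite Hk mul0r.
  by rewrite R_term // mulrA.
rewrite -mulr_suml -natr_sum /R NE.
set S := (\sum_i k i)%N; set M := Mm k.
rewrite (_ : (b.+1 + (S + M)) = (b + (S + M)).+1)%N // (_ : (b.+1 + M) = (b + M).+1)%N //.
have h1 : (b + M).+1%:R != 0 :> rat by rewrite pnatr_eq0.
move: h1 (fact_neq0 (b + M)) (kf_neq0 k) (fact_neq0 (b + (S + M))).
rewrite !factS !natrM -!natr1 !natrD => *.
field; rewrite ?natr1; by apply/and3P.
Qed.

Definition P a k : rat := if a is a'.+1 then
    a%:R * (a' + Nk d k)`!%:R / ((kf k)%:R * (a + Mm k)`!%:R)
  else (if Nk d k == 0%N then 1 else 0).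

Lemma P_term a k i : (0 < k i)%N -> P (a + (d i).+1) (ek i k) =
  ((a + (d i).+1) * k i)%:R * (a + Nk d k).-1`!%:R / ((kf k)%:R * (a + Mm k).+1`!%:R).
Proof.
move=> Hk; rewrite (_ : a + (d i).+1 = (a + d i).+1)%N ?addnS // /P.
have e1 : (a + d i + Nk d (ek i k) = (a + Nk d k).-1)%N by have := Nk_ek Hk; lia.
have e2 : ((a + d i).+1 + Mm (ek i k) = (a + Mm k).+1)%N by have := Mm_ek Hk; lia.
rewrite e1 e2 (kf_ek Hk) !natrM.
have H1 : (k i)%:R != 0 :> rat by rewrite pnatr_eq0 -lt0n.
have := kf_neq0 (ek i k); have := fact_neq0 (a + Mm k).+1.
move=> *; field; apply/and4P; split => //; [exact: fact_neq0 | by rewrite -natrD nat1r pnatr_eq0].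
Qed.

Lemma sum_aD a k : (\sum_(i < m) (a + (d i).+1) * k i = a * \sum_i k i + Nk d k)%N.
Proof.
rewrite /Nk /dotv big_distrr -big_split; apply: eq_bigr => i _ /=; by rewrite mulnDl.
Qed.

Lemma P_diff a k : P a.+1 k - P a k = \sum_(i < m) shift i (P (a + (d i).+1)) k.
Proof.
rewrite (eq_bigr (fun i => ((a + (d i).+1) * k i)%:R *
   ((a + Nk d k).-1`!%:R / ((kf k)%:R * (a + Mm k).+1`!%:R)))); last first.
  move=> i _; rewrite /shift; have [Hk|Hk] := posnP (k i); first by rewrite Hk muln0 mul0r.
  by rewrite P_term // mulrA.
rewrite -mulr_suml -natr_sum sum_aD.
case: a => [|a].
  have [HN|HN] := posnP (Nk d k).
    have Hk0 := Nk0 HN.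
    have HM : Mm k = 0%N by move: HN; rewrite NE; lia.
    have Hkf : kf k = 1%N by rewrite /kf big1 // => i _; rewrite Hk0.
    rewrite /P HN HM Hkf eqxx /= mul0n add0n mul0r; apply/eqP; rewrite subr_eq0; apply/eqP; by rewrite addn0 fact0 (_ : 1`! = 1)%N // !mul1r divr1.
  rewrite /P eqn0Ngt HN /= subr0 mul0n !add0n.
  rewrite -{1}(prednK HN) factS prednK // natrM.
  have := fact_neq0 (Mm k).+1; have := kf_neq0 k.
  by move=> *; field; apply/andP.
rewrite /P NE.
set S := (\sum_i k i)%N; set M := Mm k.
have E1 : ((a.+1 + (S + M)).-1 = a + (S + M))%N by [].
have E2 : ((a.+1 + (S + M))`! = (a + (S + M)).+1 * (a + (S + M))`!)%N by rewrite addSn factS.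
have E3 : ((a.+2 + M)`! = (a + M).+2 * ((a + M).+1 * (a + M)`!))%N by rewrite !addSn !factS.
have E3' : ((a.+1 + M).+1`! = (a + M).+2 * ((a + M).+1 * (a + M)`!))%N by rewrite !addSn !factS.
have E4 : ((a.+1 + M)`! = (a + M).+1 * (a + M)`!)%N by rewrite addSn factS.
rewrite E1 E2 E3 ?E3' E4.
have H0 := fact_neq0 (a + M); have HK := kf_neq0 k.
set F0 := (a + M)`! in H0 *; set F1 := (a + (S + M))`!.
have h1 : (a + M).+1%:R != 0 :> rat by rewrite pnatr_eq0.
have h2 : (a + M).+2%:R != 0 :> rat by rewrite pnatr_eq0.
rewrite -!natr1 !natrD in h1 h2.
rewrite !natrM !natrD !natrM -!natr1 !natrD.
field; by apply/and4P.
Qed.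

Lemma Nk_zero : Nk d (fun _ => 0%N) = 0%N.
Proof. by rewrite /Nk /dotv big1 // => x _; rewrite muln0. Qed.

Lemma conv_fam (X : nat -> mps m) :
  (forall a k, X a.+1 k - X a k = \sum_(i < m) shift i (X (a + (d i).+1)) k) ->
  forall n b a k, (Nk d k < n)%N -> mps_mul (P a) (X b) k = X (a + b)%N k.
Proof.
move=> HX; elim=> [|n IHn] b a k Hk //.
elim: a => [|a IHa].
  rewrite add0n /mps_mul.
  set B := \max_(x < m) k x.
  pose j0 : {ffun 'I_m -> 'I_B.+1} := [ffun _ => ord0].
  rewrite (bigD1 j0) /=; last by apply/forallP => x; rewrite ffunE.
  rewrite big1 ?addr0.
    have -> : (fun x => nat_of_ord (j0 x)) = (fun _ => 0%N).
      by apply: functional_extensionality => x; rewrite ffunE.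
    rewrite /P Nk_zero eqxx mul1r; congr (X b _).
    by apply: functional_extensionality => x; rewrite ffunE subn0.
  move=> j /andP[_ Hj]; rewrite /P.
  case: eqP => [HN|_]; last by rewrite mul0r.
  have H0 := Nk0 HN.
  move/eqP: Hj; case; apply/ffunP => x; apply: val_inj; rewrite ffunE; by move: (H0 x) => /= ->.
have E : mps_mul (P a.+1) (X b) k - mps_mul (P a) (X b) k = X (a + b).+1 k - X (a + b)%N k.
  rewrite -mm_sub (@mm_ext _ (fun j => \sum_(i < m) shift i (P (a + (d i).+1)) j) _ (X b));
    [|by move=> j; rewrite P_diff|by []].
  rewrite mm_sum HX; apply: eq_bigr => i _; rewrite mm_shift /shift.
  case: posnP => Hki //.
  rewrite IHn; first by rewrite addnAC.
  have := Nk_ek Hki; lia.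
rewrite addSn -(subrK (X (a + b)%N k) (X (a + b).+1 k)) -E IHa subrK //.
Qed.

Lemma PR a k : mps_mul (P a) (R 0) k = R a k.
Proof.
rewrite (@conv_fam R (fun b k => R_diff b k) (Nk d k).+1 0 a k) ?addn0 //.
Qed.

Lemma PP a b k : mps_mul (P a) (P b) k = P (a + b) k.
Proof. exact: (@conv_fam P (fun a k => P_diff a k) (Nk d k).+1 b a k). Qed.

Lemma multinomE n k : (\sum_i k i <= n)%N ->
  multinom n k = n`!%:R / ((kf k)%:R * (n - \sum_i k i)`!%:R).
Proof. by move=> _; rewrite /multinom natrM. Qed.

Lemma Fser_E k : Fser d k = (Nk d k)`!%:R / ((kf k)%:R * (Mm k).+2`!%:R).
Proof.
rewrite /Fser multinomE; last by rewrite NE; lia.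
have -> : (2 + Nk d k - \sum_i k i = (Mm k).+2)%N by rewrite NE; lia.
rewrite (_ : 2 + Nk d k = (Nk d k).+2)%N // (factS (Nk d k).+1) (factS (Nk d k)).
have := fact_neq0 (Nk d k); have := fact_neq0 (Mm k).+2; have := kf_neq0 k.
have h1 : (Nk d k).+1%:R != 0 :> rat by rewrite pnatr_eq0.
have h2 : (Nk d k).+2%:R != 0 :> rat by rewrite pnatr_eq0.
move=> *; rewrite !natrM.
rewrite (_ : (1 + Nk d k)%N = (Nk d k).+1) //.
by field; side.
Qed.

Lemma P1_F k : P 1 k = (Mm k + 2)%:R * Fser d k.
Proof.
rewrite Fser_E /P add0n (_ : (1 + Mm k)%N = (Mm k).+1) //.
rewrite (factS (Mm k).+1) natrM addn2.
have := fact_neq0 (Mm k).+1; have := kf_neq0 k.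
have h2 : (Mm k).+2%:R != 0 :> rat by rewrite pnatr_eq0.
by move=> *; field; side.
Qed.

Lemma R0_F k : R 0 k = ((Mm k).+1 * (Mm k + 2))%:R * Fser d k.
Proof.
rewrite Fser_E /R !add0n (factS (Mm k).+1) (factS (Mm k)) !natrM addn2.
have := fact_neq0 (Mm k); have := kf_neq0 k.
have h1 : (Mm k).+1%:R != 0 :> rat by rewrite pnatr_eq0.
have h2 : (Mm k).+2%:R != 0 :> rat by rewrite pnatr_eq0.
by move=> *; field; side.
Qed.

Definition cf (i : 'I_m) : rat := (d i).+1%:R / (d i + 2)%:R.

Lemma NkR k : (Nk d k)%:R = \sum_(i < m) (d i).+1%:R * (k i)%:R :> rat.
Proof. by rewrite /Nk /dotv natr_sum; apply: eq_bigr => i _; rewrite natrM. Qed.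

Lemma F_exp k : Fser d k = 2^-1 * P 2 k - \sum_(i < m) cf i * shift i (P (1 + (d i).+1)) k.
Proof.
rewrite (eq_bigr (fun i => (d i).+1%:R * (k i)%:R *
   ((Nk d k)`!%:R / ((kf k)%:R * (Mm k).+2`!%:R)))); last first.
  move=> i _; rewrite /shift; have [Hk|Hk] := posnP (k i); first by rewrite Hk mulr0n !mulr0 mul0r.
  rewrite P_term // /cf add1n.
  have h : (d i + 2)%:R != 0 :> rat by rewrite pnatr_eq0 addn2.
  rewrite (_ : (Mm k).+2 = (1 + Mm k).+1)%N // (_ : (1 + Nk d k).-1 = Nk d k)%N //.
  rewrite natrM (_ : (d i).+2 = d i + 2)%N ?addn2 //.
  by field; side.
rewrite -mulr_suml -NkR Fser_E /P.
rewrite (_ : (1 + Nk d k)%N = (Nk d k).+1) // (_ : (2 + Mm k)%N = (Mm k).+2) // (factS (Nk d k)) natrM.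
have := fact_neq0 (Nk d k); have := fact_neq0 (Mm k).+2; have := kf_neq0 k.
rewrite -(natr1 (Nk d k)).
by move=> *; field; side.
Qed.

Lemma FR k : mps_mul (Fser d) (R 0) k =
  2^-1 * R 2 k - \sum_(i < m) cf i * shift i (R (1 + (d i).+1)) k.
Proof.
rewrite (@mm_ext _ (fun j => 2^-1 * P 2 j - \sum_(i < m) cf i * shift i (P (1 + (d i).+1)) j) _ (R 0));
  [|exact: F_exp|by []].
rewrite mm_sub mm_scale PR mm_sum; congr (_ - _); apply: eq_bigr => i _.
rewrite mm_scale mm_shift /shift; case: ifP => // _; by rewrite PR.
Qed.

Lemma step1 k : mps_mul (Fser d) (Fser d) k * ((Mm k + 3) * (Mm k + 4))%:R
   = 2 * mps_mul (Fser d) (R 0) k + 2 * mps_mul (P 1) (P 1) k.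
Proof.
have -> : 2 * mps_mul (Fser d) (R 0) k = mps_mul (R 0) (Fser d) k + mps_mul (Fser d) (R 0) k.
  rewrite (mm_comm (R 0)); ring.
rewrite /mps_mul mulr_suml mulr_sumr -!big_split.
apply: eq_bigr => j /forallP Hj.
have HM := @Mm_split k (fun x => nat_of_ord (j x)) Hj.
rewrite HM !R0_F !P1_F /=.
set a := Mm _; set b := Mm _.
rewrite !natrM !natrD -!natr1.
ring.
Qed.

Lemma main k : Gser d k = mps_mul (Fser d) (Fser d) k.
Proof.
have hc : ((Mm k + 3) * (Mm k + 4))%:R != 0 :> rat.
  by rewrite pnatr_eq0 muln_eq0 negb_or !addn_eq0 !andbF.
apply: (mulIf hc); rewrite step1 FR PP.
pose C : rat := (1 + Nk d k)`!%:R / ((kf k)%:R * (1 + Mm k).+1`!%:R).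
rewrite (eq_bigr (fun i => cf i * (k i)%:R * C)); last first.
  move=> i _; rewrite /shift; have [Hk|Hk] := posnP (k i).
    by rewrite Hk mulr0n !mulr0 mul0r.
  by rewrite R_term // /C !mulrA.
rewrite -mulr_suml.
set SH := \sum_(i < m) cf i * (k i)%:R.
have HS : \sum_(i < m) (d i * (d i).+1)%:R / (d i + 2)%:R * (k i)%:R = (Nk d k)%:R - 2 * SH.
  rewrite NkR /SH mulr_sumr -sumrB; apply: eq_bigr => i _; rewrite /cf.
  have h : (d i + 2)%:R != 0 :> rat by rewrite pnatr_eq0 addn2.
  rewrite natrM; field; side.
rewrite /Gser HS multinomE; last by rewrite NE; lia.
have -> : (4 + Nk d k - \sum_i k i = (Mm k).+4)%N by rewrite NE; lia.
have HP2 : P (1 + 1) k = 2%:R * (1 + Nk d k)`!%:R / ((kf k)%:R * (2 + Mm k)`!%:R) by [].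
rewrite HP2 /C /R.
set N := Nk d k; set M := Mm k.
have E1 : ((4 + N)`! = N.+4 * (N.+3 * (N.+2 * N.+1`!)))%N by rewrite !factS.
have E2 : ((2 + N)`! = N.+2 * N.+1`!)%N by rewrite !factS.
have E3 : ((M.+4)`! = M.+4 * (M.+3 * M.+2`!))%N by rewrite !factS.
have E4 : ((1 + N)`! = N.+1`!)%N by [].
have E5 : ((1 + M).+1`! = M.+2`!)%N by [].
have E6 : ((2 + M)`! = M.+2`!)%N by [].
have E7 : ((1 + 0 + N)`! = N.+1`!)%N by [].
have E8 : ((1 + 1)%N = 2)%N by [].
rewrite E1 E2 E3 ?E4 ?E5 ?E6 ?E7.
have HF1 := fact_neq0 N.+1; have HF2 := fact_neq0 M.+2; have HK := kf_neq0 k.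
move: HF1 HF2; generalize (N.+1)`! (M.+2)`! => F1 F2 HF1 HF2.
rewrite (_ : (2 + N)%N = N.+2) // (_ : (3 + N)%N = N.+3) // (_ : (4 + N)%N = N.+4) //.
rewrite !natrM -!natr1 !natrD.
field; side; apply/eqP => Hc; move: (ler0n rat N) (ler0n rat M); lra.
Qed.

End Conv.

Theorem theoremA2 (m : nat) (d : 'I_m -> nat) (k : 'I_m -> nat) :
  Gser d k = mps_mul (Fser d) (Fser d) k.
Proof. exact: main. Qed.
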